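(* Let $X$ be a Hausdorff, locally compact, arc connected space with at least two points, let $\mathcal I$ be an ideal on $X$ and $\alpha$ an infinite cardinal. Then for all $a,b\in X$ the groups $\mathfrak P^\alpha_{\mathcal I}(X,a)$ and $\mathfrak P^\alpha_{\mathcal I}(X,b)$ are isomorphic.
   Context: A space is arc connected if any two distinct points $p,q$ are joined by a continuous injective map $h:[0,1]\to X$ with $h(0)=p$, $h(1)=q$. An ideal on a set $X$ is a nonempty family $\mathcal I$ of subsets of $X$ closed under finite unions and under taking subsets. For a nonzero cardinal $\alpha$ and an ideal $\mathcal I$ on $X$, a continuous map $f:Z\to X$ is an $\alpha\frac{\mathcal I}{}$map if there is $A\in\mathcal I$ such that for every $x\in X\setminus A$ one has $|f^{-1}(x)|\le\alpha$ when $\alpha$ is finite, and $|f^{-1}(x)|<\alpha$ when $\alpha$ is infinite. An $\alpha\frac{\mathcal I}{}$loop with base point $a$ is an $\alpha\frac{\mathcal I}{}$map $f:[0,1]\to X$ with $f(0)=f(1)=a$. $\mathfrak P^\alpha_{\mathcal I}(X,a)$ denotes the subgroup of $\pi_1(X,a)$ generated by the homotopy classes (rel endpoints) of all $\alpha\frac{\mathcal I}{}$loops with base point $a$. *)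

(* Defs.v *)
From Stdlib Require Import Reals List.
Open Scope R_scope.

Record TopSpace := {
  carrier :> Type;
  is_open : (carrier -> Prop) -> Prop;
  open_full : is_open (fun _ => True);
  open_empty : is_open (fun _ => False);
  open_inter : forall U V, is_open U -> is_open V -> is_open (fun x => U x /\ V x);
  open_union : forall F : (carrier -> Prop) -> Prop,
      (forall U, F U -> is_open U) -> is_open (fun x => exists U, F U /\ U x)
}.

Definition hausdorff (X : TopSpace) : Prop :=
  forall x y : X, x <> y -> exists U V, is_open X U /\ is_open X V /\ U x /\ V y /\
    forall z, ~ (U z /\ V z).

Definition compact (X : TopSpace) (K : X -> Prop) : Prop :=
  forall C : (X -> Prop) -> Prop,
    (forall U, C U -> is_open X U) ->
    (forall x, K x -> exists U, C U /\ U x) ->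
    exists l : list (X -> Prop), (forall U, In U l -> C U) /\
      (forall x, K x -> exists U, In U l /\ U x).

Definition locally_compact (X : TopSpace) : Prop :=
  forall x : X, exists U K, is_open X U /\ U x /\ (forall y, U y -> K y) /\ compact X K.

(* The unit interval [0,1] as a subspace of R; maps [0,1] -> X are
   represented as functions R -> X whose values outside [0,1] are irrelevant. *)
Definition I01 (t : R) : Prop := 0 <= t <= 1.

Definition cont01 (X : TopSpace) (f : R -> X) : Prop :=
  forall U, is_open X U -> forall t, I01 t -> U (f t) ->
    exists eps, eps > 0 /\ forall s, I01 s -> Rabs (s - t) < eps -> U (f s).

Definition cont01x01 (X : TopSpace) (H : R -> R -> X) : Prop :=
  forall U, is_open X U -> forall s t, I01 s -> I01 t -> U (H s t) ->
    exists eps, eps > 0 /\ forall s' t', I01 s' -> I01 t' ->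
      Rabs (s' - s) < eps -> Rabs (t' - t) < eps -> U (H s' t').

Definition arc_connected (X : TopSpace) : Prop :=
  forall p q : X, p <> q -> exists h : R -> X,
    cont01 X h /\ (forall s t, I01 s -> I01 t -> h s = h t -> s = t) /\
    h 0 = p /\ h 1 = q.

Definition ideal (X : Type) (Id : (X -> Prop) -> Prop) : Prop :=
  (exists A, Id A) /\
  (forall A B, Id A -> Id B -> Id (fun x => A x \/ B x)) /\
  (forall A B, Id A -> (forall x, B x -> A x) -> Id B).

(* A cardinal is represented by a type K (its cardinality |K|). *)
Definition infinite_card (K : Type) : Prop :=
  exists g : nat -> K, forall m n, g m = g n -> m = n.

(* |{t : R | A t}| < |K| *)
Definition card_lt (A : R -> Prop) (K : Type) : Prop :=
  (exists g : R -> K, forall s t, A s -> A t -> g s = g t -> s = t) /\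
  ~ (exists h : K -> R, (forall k, A (h k)) /\ forall k l, h k = h l -> k = l).

Definition alpha_I_map (X : TopSpace) (K : Type) (Id : (X -> Prop) -> Prop)
  (f : R -> X) : Prop :=
  cont01 X f /\ exists A, Id A /\
    forall x : X, ~ A x -> card_lt (fun t => I01 t /\ f t = x) K.

Definition is_loop (X : TopSpace) (a : X) (f : R -> X) : Prop :=
  cont01 X f /\ f 0 = a /\ f 1 = a.

Definition alpha_I_loop (X : TopSpace) (K : Type) (Id : (X -> Prop) -> Prop)
  (a : X) (f : R -> X) : Prop :=
  alpha_I_map X K Id f /\ f 0 = a /\ f 1 = a.

Definition loop_homotopic (X : TopSpace) (a : X) (f g : R -> X) : Prop :=
  is_loop X a f /\ is_loop X a g /\
  exists H : R -> R -> X, cont01x01 X H /\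
    (forall t, I01 t -> H 0 t = f t) /\ (forall t, I01 t -> H 1 t = g t) /\
    (forall s, I01 s -> H s 0 = a /\ H s 1 = a).

Definition const_loop (X : TopSpace) (a : X) : R -> X := fun _ => a.
Definition rev_path (X : TopSpace) (f : R -> X) : R -> X := fun t => f (1 - t).
Definition concat (X : TopSpace) (f g : R -> X) : R -> X :=
  fun t => if Rle_dec t (1/2) then f (2 * t) else g (2 * t - 1).

(* Loops whose homotopy class lies in the subgroup P^alpha_I(X,a) of pi_1(X,a)
   generated by the classes of alpha I-loops at a. *)
Inductive inP (X : TopSpace) (K : Type) (Id : (X -> Prop) -> Prop) (a : X)
  : (R -> X) -> Prop :=
| inP_gen : forall f, alpha_I_loop X K Id a f -> inP X K Id a f
| inP_one : inP X K Id a (const_loop X a)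
| inP_inv : forall f, inP X K Id a f -> inP X K Id a (rev_path X f)
| inP_mul : forall f g, inP X K Id a f -> inP X K Id a g -> inP X K Id a (concat X f g)
| inP_hom : forall f g, inP X K Id a f -> loop_homotopic X a f g -> inP X K Id a g.

(* Group isomorphism P^alpha_I(X,a) ~= P^alpha_I(X,b), with elements given as
   homotopy classes of loops (phi acts on representatives). *)
Definition P_isomorphic (X : TopSpace) (K : Type) (Id : (X -> Prop) -> Prop)
  (a b : X) : Prop :=
  exists phi : (R -> X) -> (R -> X),
    (forall f, inP X K Id a f -> inP X K Id b (phi f)) /\
    (forall f g, inP X K Id a f -> loop_homotopic X a f g ->
        loop_homotopic X b (phi f) (phi g)) /\
    (forall f g, inP X K Id a f -> inP X K Id a g ->
        loop_homotopic X b (phi f) (phi g) -> loop_homotopic X a f g) /\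
    (forall g, inP X K Id b g -> exists f, inP X K Id a f /\
        loop_homotopic X b (phi f) g) /\
    (forall f g, inP X K Id a f -> inP X K Id a g ->
        loop_homotopic X b (phi (concat X f g)) (concat X (phi f) (phi g))).

(* Main.v *)
Require Import Defs.
From Stdlib Require Import Reals List.
From Stdlib Require Import Lra Psatz Classical ClassicalEpsilon.
Require Import Defs.
Open Scope R_scope.

Definition rc2 (th : R -> R -> R) := forall s t, I01 s -> I01 t -> forall e, e > 0 ->
  exists d, d > 0 /\ forall s' t', I01 s' -> I01 t' -> Rabs (s' - s) < d -> Rabs (t' - t) < d ->
   Rabs (th s' t' - th s t) < e.
Definition inI2 (th : R -> R -> R) := forall s t, I01 s -> I01 t -> I01 (th s t).

Lemma cont2_comp2 {X : TopSpace} (H : R -> R -> X) th1 th2 :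
  cont01x01 X H -> rc2 th1 -> rc2 th2 -> inI2 th1 -> inI2 th2 ->
  cont01x01 X (fun s t => H (th1 s t) (th2 s t)).
Proof.
  intros HH c1 c2 i1 i2 U HU s t Is It HUst.
  destruct (HH U HU _ _ (i1 s t Is It) (i2 s t Is It) HUst) as [e [He Hc]].
  destruct (c1 s t Is It e He) as [d1 [Hd1 P1]].
  destruct (c2 s t Is It e He) as [d2 [Hd2 P2]].
  exists (Rmin d1 d2); split. apply Rmin_pos; lra.
  intros s' t' Is' It' Hs Ht. apply Hc; auto.
  apply P1; auto; eapply Rlt_le_trans; eauto; apply Rmin_l.
  apply P2; auto; eapply Rlt_le_trans; eauto; apply Rmin_r.
Qed.

Lemma rc2_lip th L : L > 0 ->
  (forall s t s' t', I01 s -> I01 t -> I01 s' -> I01 t' ->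
     Rabs (th s' t' - th s t) <= L * (Rabs (s' - s) + Rabs (t' - t))) -> rc2 th.
Proof.
  intros HL Hl s t Is It e He. exists (e / (2 * L)). split.
  apply Rdiv_lt_0_compat; lra.
  intros s' t' Is' It' H1 H2. eapply Rle_lt_trans. apply Hl; auto.
  apply Rlt_le_trans with (L * (e / (2 * L) + e / (2 * L))).
  apply Rmult_lt_compat_l; lra.
  right. field. lra.
Qed.

Lemma cont2_swap {X : TopSpace} (H : R -> R -> X) :
  cont01x01 X H -> cont01x01 X (fun s t => H t s).
Proof.
  intros HH U HU s t Is It Hu. destruct (HH U HU t s It Is Hu) as [e [He Hc]].
  exists e; split; auto.
Qed.

Lemma cont2_of1 {X : TopSpace} (f : R -> X) :
  cont01 X f -> cont01x01 X (fun _ t => f t).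
Proof.
  intros Hf U HU s t Is It Hu. destruct (Hf U HU t It Hu) as [e [He Hc]].
  exists e; split; auto.
Qed.

Lemma cont1_of2 {X : TopSpace} (H : R -> R -> X) s0 :
  cont01x01 X H -> I01 s0 -> cont01 X (fun t => H s0 t).
Proof.
  intros HH Is U HU t It Hu. destruct (HH U HU s0 t Is It Hu) as [e [He Hc]].
  exists e; split; auto. intros s Is' Hs. apply Hc; auto.
  rewrite Rminus_diag, Rabs_R0; lra.
Qed.

Lemma cont2_paste {X : TopSpace} (F G : R -> R -> X) :
  cont01x01 X F -> cont01x01 X G -> (forall s, I01 s -> F s 1 = G s 0) ->
  cont01x01 X (fun s t => if Rle_dec t (1/2) then F s (2*t) else G s (2*t-1)).
Proof.
  intros HF HG HFG U HU s t Is It.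
  unfold I01 in *.
  destruct (total_order_T t (1/2)) as [[Hlt|Heq]|Hgt].
  - destruct (Rle_dec t (1/2)) as [_|n]; [|lra]. intro Hu.
    destruct (HF U HU s (2*t) Is ltac:(unfold I01; lra) Hu) as [e [He Hc]].
    exists (Rmin (e/2) (1/2 - t)). split. apply Rmin_pos; lra.
    intros s' t' Is' It' Hs Ht.
    assert (Hm1 := Rmin_l (e/2) (1/2 - t)). assert (Hm2 := Rmin_r (e/2) (1/2 - t)).
    destruct (Rle_dec t' (1/2)) as [Hl|n].
    + apply Hc; unfold I01 in *; try lra.
      replace (2*t' - 2*t) with (2 * (t' - t)) by ring. rewrite Rabs_mult, Rabs_right by lra. lra.
    + exfalso. apply n. apply Rabs_def2 in Ht. lra.
  - subst t. destruct (Rle_dec (1/2) (1/2)) as [_|n]; [|lra].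
    replace (2 * (1/2)) with 1 by field. intro Hu.
    destruct (HF U HU s 1 Is ltac:(unfold I01; lra) Hu) as [e1 [He1 Hc1]].
    rewrite (HFG s Is) in Hu.
    destruct (HG U HU s 0 Is ltac:(unfold I01; lra) Hu) as [e2 [He2 Hc2]].
    exists (Rmin e1 e2 / 2). split. unfold Rdiv. apply Rmult_lt_0_compat; [apply Rmin_pos; lra| lra].
    intros s' t' Is' It' Hs Ht.
    assert (Hm1 := Rmin_l e1 e2). assert (Hm2 := Rmin_r e1 e2).
    apply Rabs_def2 in Ht.
    assert (0 < Rmin e1 e2) by (apply Rmin_pos; lra).
    destruct (Rle_dec t' (1/2)) as [Hl|n].
    + apply Hc1; unfold I01 in *; try lra.
      rewrite Rabs_left1 by lra. lra.
    + apply Hc2; unfold I01 in *; try lra.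
      rewrite Rabs_right by lra. lra.
  - destruct (Rle_dec t (1/2)) as [n|_]; [lra|]. intro Hu.
    destruct (HG U HU s (2*t-1) Is ltac:(unfold I01; lra) Hu) as [e [He Hc]].
    exists (Rmin (e/2) (t - 1/2)). split. apply Rmin_pos; lra.
    intros s' t' Is' It' Hs Ht.
    assert (Hm1 := Rmin_l (e/2) (t - 1/2)). assert (Hm2 := Rmin_r (e/2) (t - 1/2)).
    destruct (Rle_dec t' (1/2)) as [n|Hl].
    + exfalso. apply Rabs_def2 in Ht. lra.
    + apply Hc; unfold I01 in *; try lra.
      replace (2*t' - 1 - (2*t - 1)) with (2 * (t' - t)) by ring. rewrite Rabs_mult, Rabs_right by lra. lra.
Qed.

Definition Lip (p : R -> R) := forall s t, I01 s -> I01 t -> Rabs (p s - p t) <= 2 * Rabs (s - t).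
Definition inI (p : R -> R) := forall t, I01 t -> I01 (p t).

Lemma lin_bound p q s t s' t' : Lip p -> Lip q -> inI p -> inI q ->
  I01 s -> I01 t -> I01 s' -> I01 t' ->
  Rabs (((1 - s') * p t' + s' * q t') - ((1 - s) * p t + s * q t))
   <= 6 * (Rabs (s' - s) + Rabs (t' - t)).
Proof.
  intros Lp Lq ip iq Is It Is' It'.
  assert (H1 := Lp t' t It' It). assert (H2 := Lq t' t It' It).
  assert (Hp := ip t It). assert (Hq := iq t It).
  replace (((1 - s') * p t' + s' * q t') - ((1 - s) * p t + s * q t))
    with ((p t' - p t) + s' * ((q t' - q t) + - (p t' - p t)) + (s' - s) * (q t - p t)) by ring.
  eapply Rle_trans; [apply Rabs_triang|].
  eapply Rle_trans; [apply Rplus_le_compat_r; apply Rabs_triang|].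
  rewrite !Rabs_mult.
  assert (H3 := Rabs_triang (q t' - q t) (- (p t' - p t))). rewrite Rabs_Ropp in H3.
  assert (Hs : Rabs s' <= 1) by (unfold I01 in *; rewrite Rabs_right; lra).
  assert (Hd : Rabs (q t - p t) <= 1) by (unfold I01 in *; apply Rabs_le; lra).
  assert (0 <= Rabs ((q t' - q t) + - (p t' - p t))) by apply Rabs_pos.
  assert (0 <= Rabs (s' - s)) by apply Rabs_pos.
  assert (0 <= Rabs (t' - t)) by apply Rabs_pos.
  assert (0 <= Rabs s') by apply Rabs_pos.
  nra.
Qed.

Definition path (X : TopSpace) (f : R -> X) (x y : X) := cont01 X f /\ f 0 = x /\ f 1 = y.
Definition phom (X : TopSpace) (x y : X) (f g : R -> X) :=
  path X f x y /\ path X g x y /\ exists H : R -> R -> X, cont01x01 X H /\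
    (forall t, I01 t -> H 0 t = f t) /\ (forall t, I01 t -> H 1 t = g t) /\
    (forall s, I01 s -> H s 0 = x /\ H s 1 = y).

Lemma lh_phom (X : TopSpace) a f g : loop_homotopic X a f g <-> phom X a a f g.
Proof.
  unfold loop_homotopic, phom, is_loop, path. tauto.
Qed.

Lemma I0 : I01 0. Proof. unfold I01; lra. Qed.
Lemma I1 : I01 1. Proof. unfold I01; lra. Qed.

Lemma cont_ext (X : TopSpace) (f g : R -> X) : cont01 X f -> (forall t, I01 t -> f t = g t) -> cont01 X g.
Proof.
  intros Hf E U HU t It Hu. rewrite <- E in Hu by auto.
  destruct (Hf U HU t It Hu) as [e [He Hc]]. exists e; split; auto.
  intros s Is Hs. rewrite <- E by auto. auto.
Qed.

Lemma path_ext (X : TopSpace) f g x y : path X f x y -> (forall t, I01 t -> f t = g t) -> path X g x y.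
Proof.
  intros [c [h0 h1]] E. split; [eapply cont_ext; eauto|].
  rewrite <- (E 0 I0), <- (E 1 I1). auto.
Qed.

Lemma phom_ext (X : TopSpace) x y f g f' g' : phom X x y f g ->
  (forall t, I01 t -> f t = f' t) -> (forall t, I01 t -> g t = g' t) -> phom X x y f' g'.
Proof.
  intros [pf [pg [H [c [h0 [h1 h2]]]]]] E1 E2. split; [exact (path_ext X f f' x y pf E1)|].
  split; [exact (path_ext X g g' x y pg E2)|]. exists H. split; [auto|]. split; [|split; [|auto]].
  intros t It; rewrite <- E1; auto. intros t It; rewrite <- E2; auto.
Qed.

Lemma rc2_fst : rc2 (fun s t => s).
Proof. apply (rc2_lip _ 1); [lra|]. intros. pose proof (Rabs_pos (t' - t)). lra. Qed.
Lemma rc2_snd : rc2 (fun s t => t).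
Proof. apply (rc2_lip _ 1); [lra|]. intros. pose proof (Rabs_pos (s' - s)). lra. Qed.

Lemma cont_comp (X : TopSpace) (f : R -> X) (p : R -> R) : cont01 X f -> Lip p -> inI p ->
  cont01 X (fun t => f (p t)).
Proof.
  intros cf lp ip.
  assert (C := cont2_comp2 (fun _ r : R => f r) (fun s t => s) (fun s t => p t) (cont2_of1 f cf) rc2_fst).
  simpl in C. refine (cont1_of2 _ 0 (C _ _ _) I0).
  { apply (rc2_lip _ 2); [lra|]. intros. pose proof (Rabs_pos (s' - s)).
    specialize (lp t' t H2 H0). lra.
  } intros s t Is It; auto. intros s t Is It; auto.
Qed.

Lemma path_rev (X : TopSpace) f x y : path X f x y -> path X (rev_path X f) y x.
Proof.
  intros [c [h0 h1]]. split.
  - unfold rev_path. apply (cont_comp X f (fun t => 1 - t)); auto.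
    intros s t _ _. replace (1 - s - (1 - t)) with (- (s - t)) by ring. rewrite Rabs_Ropp.
    pose proof (Rabs_pos (s - t)). lra.
    intros t It; unfold I01 in *; lra.
  - unfold rev_path. replace (1 - 0) with 1 by ring. replace (1 - 1) with 0 by ring. auto.
Qed.

Lemma concat_0 (X : TopSpace) f g : concat X f g 0 = f 0.
Proof. unfold concat. destruct (Rle_dec 0 (1/2)); [|lra]. f_equal; ring. Qed.
Lemma concat_1 (X : TopSpace) f g : concat X f g 1 = g 1.
Proof. unfold concat. destruct (Rle_dec 1 (1/2)); [lra|]. f_equal; ring. Qed.

Lemma path_concat (X : TopSpace) f g x y z : path X f x y -> path X g y z -> path X (concat X f g) x z.
Proof.
  intros [cf [f0 f1]] [cg [g0 g1]]. split; [|rewrite concat_0, concat_1; auto].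
  assert (C := cont2_paste (fun _ t => f t) (fun _ t => g t) (cont2_of1 f cf) (cont2_of1 g cg)
     ltac:(intros; simpl; congruence)).
  apply (cont1_of2 _ 0 C I0).
Qed.

Lemma phom_refl (X : TopSpace) f x y : path X f x y -> phom X x y f f.
Proof.
  intros P. split; auto. split; auto. destruct P as [c [h0 h1]].
  exists (fun _ t => f t). repeat split; auto. apply cont2_of1; auto.
Qed.

Lemma phom_sym (X : TopSpace) f g x y : phom X x y f g -> phom X x y g f.
Proof.
  intros [pf [pg [H [c [h0 [h1 h2]]]]]]. split; auto. split; auto.
  exists (fun s t => H (1 - s) t). split.
  - apply (cont2_comp2 H (fun s t => 1 - s) (fun s t => t)); auto.
    apply (rc2_lip _ 1); [lra|]. intros. pose proof (Rabs_pos (t' - t)).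
    replace (1 - s' - (1 - s)) with (- (s' - s)) by ring. rewrite Rabs_Ropp. lra.
    apply rc2_snd. intros s t Is It; unfold I01 in *; lra. intros s t Is It; auto.
  - split. intros t It. replace (1 - 0) with 1 by ring. auto.
    split. intros t It. replace (1 - 1) with 0 by ring. auto.
    intros s Is. apply h2. unfold I01 in *; lra.
Qed.

Lemma phom_trans (X : TopSpace) f g k x y : phom X x y f g -> phom X x y g k -> phom X x y f k.
Proof.
  intros [pf [pg [H1 [c1 [a0 [a1 a2]]]]]] [_ [pk [H2 [c2 [b0 [b1 b2]]]]]].
  split; auto. split; auto.
  exists (fun s t => if Rle_dec s (1/2) then H1 (2*s) t else H2 (2*s-1) t). split.
  - apply (cont2_swap (fun t s => if Rle_dec s (1/2) then H1 (2*s) t else H2 (2*s-1) t)).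
    apply (cont2_paste (fun t s => H1 s t) (fun t s => H2 s t)).
    apply cont2_swap; auto. apply cont2_swap; auto.
    intros t It. rewrite a1, b0; auto.
  - split. intros t It. destruct (Rle_dec 0 (1/2)); [|lra]. replace (2*0) with 0 by ring. auto.
    split. intros t It. destruct (Rle_dec 1 (1/2)); [lra|]. replace (2*1-1) with 1 by ring. auto.
    intros s Is. destruct (Rle_dec s (1/2)).
    apply a2; unfold I01 in *; lra. apply b2; unfold I01 in *; lra.
Qed.

Lemma phom_concat (X : TopSpace) f f' g g' x y z : phom X x y f f' -> phom X y z g g' ->
  phom X x z (concat X f g) (concat X f' g').
Proof.
  intros [pf [pf' [H1 [c1 [a0 [a1 a2]]]]]] [pg [pg' [H2 [c2 [b0 [b1 b2]]]]]].
  split; [eapply path_concat; eauto|]. split; [eapply path_concat; eauto|].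
  exists (fun s t => if Rle_dec t (1/2) then H1 s (2*t) else H2 s (2*t-1)). split.
  - apply cont2_paste; auto. intros s Is. destruct (a2 s Is), (b2 s Is). congruence.
  - split. intros t It. unfold concat. destruct (Rle_dec t (1/2)).
    apply a0; unfold I01 in *; lra. apply b0; unfold I01 in *; lra.
    split. intros t It. unfold concat. destruct (Rle_dec t (1/2)).
    apply a1; unfold I01 in *; lra. apply b1; unfold I01 in *; lra.
    intros s Is. split.
    destruct (Rle_dec 0 (1/2)); [|lra]. replace (2*0) with 0 by ring. apply a2; auto.
    destruct (Rle_dec 1 (1/2)); [lra|]. replace (2*1-1) with 1 by ring. apply b2; auto.
Qed.

Lemma phom_lin (X : TopSpace) (f : R -> X) p q : cont01 X f -> Lip p -> Lip q -> inI p -> inI q ->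
  p 0 = q 0 -> p 1 = q 1 ->
  phom X (f (p 0)) (f (p 1)) (fun t => f (p t)) (fun t => f (q t)).
Proof.
  intros cf lp lq ip iq e0 e1.
  set (th := fun s t => (1 - s) * p t + s * q t).
  assert (ith : inI2 th).
  { intros s t Is It. unfold th. specialize (ip t It). specialize (iq t It). unfold I01 in *. nra. }
  assert (C := cont2_comp2 (fun _ r : R => f r) (fun s t => s) th (cont2_of1 f cf) rc2_fst).
  simpl in C. specialize (C ltac:(apply (rc2_lip _ 6); [lra|]; intros; unfold th; apply lin_bound; auto)
     ltac:(intros s t Is It; auto) ith).
  assert (Hend : forall s, I01 s -> f (th s 0) = f (p 0) /\ f (th s 1) = f (p 1)).
  { intros s Is. unfold th. rewrite <- e0, <- e1. split; f_equal; ring. }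
  split; [|split].
  - split; [apply cont_comp; auto|]. auto.
  - split; [apply cont_comp; auto|]. rewrite e0, e1. auto.
  - exists (fun s t => f (th s t)). split; auto. split.
    intros t It. unfold th. f_equal; ring. split.
    intros t It. unfold th. f_equal; ring. auto.
Qed.

Ltac dec := repeat match goal with |- context [Rle_dec ?a ?b] => destruct (Rle_dec a b) end.

Definition phia t := if Rle_dec t (1/4) then 2*t else if Rle_dec t (1/2) then t + 1/4 else (t+1)/2.
Definition phil t := if Rle_dec t (1/2) then 0 else 2*t-1.
Definition phir t := if Rle_dec t (1/2) then 2*t else 1.
Definition phii t := 1 - Rabs (1 - 2*t).

Lemma Lip_id : Lip (fun t => t).
Proof. intros s t _ _. pose proof (Rabs_pos (s - t)). lra. Qed.
Lemma inI_id : inI (fun t => t).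
Proof. intros t It; auto. Qed.
Lemma Lip_0 : Lip (fun t => 0).
Proof. intros s t _ _. pose proof (Rabs_pos (s - t)). rewrite Rminus_diag, Rabs_R0. lra. Qed.
Lemma inI_0 : inI (fun t => 0).
Proof. intros t It; unfold I01; lra. Qed.

Lemma Lip_phia : Lip phia.
Proof. intros s t Is It. unfold phia, I01 in *. dec; split_Rabs; lra. Qed.
Lemma inI_phia : inI phia.
Proof. intros t It. unfold phia, I01 in *. dec; lra. Qed.
Lemma Lip_phil : Lip phil.
Proof. intros s t Is It. unfold phil, I01 in *. dec; split_Rabs; lra. Qed.
Lemma inI_phil : inI phil.
Proof. intros t It. unfold phil, I01 in *. dec; lra. Qed.
Lemma Lip_phir : Lip phir.
Proof. intros s t Is It. unfold phir, I01 in *. dec; split_Rabs; lra. Qed.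
Lemma inI_phir : inI phir.
Proof. intros t It. unfold phir, I01 in *. dec; lra. Qed.
Lemma Lip_phii : Lip phii.
Proof. intros s t Is It. unfold phii, I01 in *. split_Rabs; lra. Qed.
Lemma inI_phii : inI phii.
Proof. intros t It. unfold phii, I01 in *. split_Rabs; lra. Qed.

Lemma phom_assoc (X : TopSpace) f g k x y z w : path X f x y -> path X g y z -> path X k z w ->
  phom X x w (concat X (concat X f g) k) (concat X f (concat X g k)).
Proof.
  intros pf pg pk.
  assert (pF := path_concat X _ _ _ _ _ pf (path_concat X _ _ _ _ _ pg pk)).
  destruct pF as [cF [F0 F1]].
  assert (P := phom_lin X _ phia (fun t => t) cF Lip_phia Lip_id inI_phia inI_id
    ltac:(unfold phia; dec; lra) ltac:(unfold phia; dec; lra)).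
  replace (phia 0) with 0 in P by (unfold phia; dec; lra).
  replace (phia 1) with 1 in P by (unfold phia; dec; lra).
  rewrite F0, F1 in P.
  eapply phom_ext; [exact P| |]; intros t It; [|reflexivity].
  unfold phia, concat. dec; try (exfalso; lra); f_equal; lra.
Qed.

Lemma phom_lid (X : TopSpace) f x y : path X f x y ->
  phom X x y (concat X (const_loop X x) f) f.
Proof.
  intros [cf [f0 f1]].
  assert (P := phom_lin X _ phil (fun t => t) cf Lip_phil Lip_id inI_phil inI_id
    ltac:(unfold phil; dec; lra) ltac:(unfold phil; dec; lra)).
  replace (phil 0) with 0 in P by (unfold phil; dec; lra).
  replace (phil 1) with 1 in P by (unfold phil; dec; lra).
  rewrite f0, f1 in P.
  eapply phom_ext; [exact P| |]; intros t It; [|reflexivity].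
  unfold phil, concat, const_loop. dec; try (exfalso; lra); auto; f_equal; lra.
Qed.

Lemma phom_rid (X : TopSpace) f x y : path X f x y ->
  phom X x y (concat X f (const_loop X y)) f.
Proof.
  intros [cf [f0 f1]].
  assert (P := phom_lin X _ phir (fun t => t) cf Lip_phir Lip_id inI_phir inI_id
    ltac:(unfold phir; dec; lra) ltac:(unfold phir; dec; lra)).
  replace (phir 0) with 0 in P by (unfold phir; dec; lra).
  replace (phir 1) with 1 in P by (unfold phir; dec; lra).
  rewrite f0, f1 in P.
  eapply phom_ext; [exact P| |]; intros t It; [|reflexivity].
  unfold phir, concat, const_loop. dec; try (exfalso; lra); auto; f_equal; lra.
Qed.

Lemma phom_inv (X : TopSpace) f x y : path X f x y ->
  phom X x x (concat X f (rev_path X f)) (const_loop X x).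
Proof.
  intros [cf [f0 f1]].
  assert (P := phom_lin X _ phii (fun t => 0) cf Lip_phii Lip_0 inI_phii inI_0
    ltac:(unfold phii; split_Rabs; lra) ltac:(unfold phii; split_Rabs; lra)).
  replace (phii 0) with 0 in P by (unfold phii; split_Rabs; lra).
  replace (phii 1) with 0 in P by (unfold phii; split_Rabs; lra).
  rewrite f0 in P.
  eapply phom_ext; [exact P| |]; intros t It; unfold const_loop; [|auto].
  unfold phii, concat, rev_path. unfold I01 in It. dec; f_equal; split_Rabs; lra.
Qed.

Definition conjg (X : TopSpace) (u k : R -> X) := concat X (rev_path X u) (concat X k u).

Lemma path_const (X : TopSpace) (x : X) : path X (const_loop X x) x x.
Proof. split; [|split; reflexivity]. intros U HU t It Hu. exists 1. split; [lra|]. auto. Qed.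

Global Hint Resolve path_concat path_rev path_const : pth.
Ltac pth := eauto with pth.

Lemma phom_path1 (X : TopSpace) x y f g : phom X x y f g -> path X f x y.
Proof. intros [p _]; auto. Qed.
Lemma phom_path2 (X : TopSpace) x y f g : phom X x y f g -> path X g x y.
Proof. intros [_ [p _]]; auto. Qed.

Lemma rev_rev (X : TopSpace) (u : R -> X) t : rev_path X (rev_path X u) t = u t.
Proof. unfold rev_path. f_equal; ring. Qed.

Lemma path_conj (X : TopSpace) u k a b : path X u a b -> path X k a a -> path X (conjg X u k) b b.
Proof. intros. unfold conjg. pth. Qed.

Lemma conj_hom (X : TopSpace) u k k' a b : path X u a b -> phom X a a k k' ->
  phom X b b (conjg X u k) (conjg X u k').
Proof.
  intros pu H. unfold conjg. apply phom_concat with a. apply phom_refl; pth.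
  apply phom_concat with a; auto. apply phom_refl; auto.
Qed.

Lemma conj_mul (X : TopSpace) u f g a b : path X u a b -> path X f a a -> path X g a a ->
  phom X b b (conjg X u (concat X f g)) (concat X (conjg X u f) (conjg X u g)).
Proof.
  intros pu pf pg. unfold conjg.
  assert (pu' := path_rev X u a b pu).
  eapply phom_trans.
  { apply phom_concat with a. apply phom_refl; eauto. apply phom_assoc with a a; eauto. }
  eapply phom_trans.
  { apply phom_concat with a. apply phom_refl; eauto.
    apply phom_concat with a. apply phom_refl; eauto.
    apply phom_sym. eapply phom_trans.
    { apply phom_concat with a. apply phom_inv with b; eauto. apply (phom_refl X (concat X g u)); pth. }
    apply phom_lid; pth. }
  eapply phom_trans.
  { apply phom_concat with a. apply phom_refl; eauto.
    apply phom_concat with a. apply phom_refl; eauto.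
    apply phom_assoc with b a; pth. }
  eapply phom_trans.
  { apply phom_concat with a. apply phom_refl; eauto.
    apply phom_sym. apply phom_assoc with a b; pth. }
  apply phom_sym. apply phom_assoc with a b; pth.
Qed.

Lemma conj_cancel (X : TopSpace) u k a b : path X u a b -> path X k a a ->
  phom X a a (conjg X (rev_path X u) (conjg X u k)) k.
Proof.
  intros pu pk. assert (pu' := path_rev X u a b pu).
  apply phom_ext with (concat X u (concat X (conjg X u k) (rev_path X u))) k;
    [| intros t _; unfold conjg, concat; destruct (Rle_dec t (1/2)); [rewrite rev_rev|]; reflexivity
     | reflexivity].
  unfold conjg.
  eapply phom_trans. { apply phom_concat with b. apply phom_refl; eauto. apply phom_assoc with a b; pth. }
  eapply phom_trans. { apply phom_sym. apply phom_assoc with b a; pth. }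
  eapply phom_trans. { apply phom_concat with a. apply phom_inv with b; eauto. apply phom_refl; pth. }
  eapply phom_trans. { apply phom_lid; pth. }
  eapply phom_trans. { apply phom_assoc with a b; pth. }
  eapply phom_trans. { apply phom_concat with a. apply phom_refl; eauto. apply phom_inv with b; eauto. }
  apply phom_rid; auto.
Qed.

Lemma phom_inv' (X : TopSpace) f x y : path X f x y ->
  phom X y y (concat X (rev_path X f) f) (const_loop X y).
Proof.
  intros pf. apply phom_ext with (concat X (rev_path X f) (rev_path X (rev_path X f))) (const_loop X y);
    [| intros t _; unfold concat; destruct (Rle_dec t (1/2)); [|rewrite rev_rev]; reflexivity
     | reflexivity].
  apply phom_inv with x; pth.
Qed.

Lemma conj_const (X : TopSpace) u a b : path X u a b ->
  phom X b b (conjg X u (const_loop X a)) (const_loop X b).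
Proof.
  intros pu. unfold conjg. eapply phom_trans.
  { apply phom_concat with a. apply phom_refl; pth. apply phom_lid; auto. }
  apply phom_inv' with a; auto.
Qed.

Lemma inv_unique (X : TopSpace) f g x y : path X f x y -> path X g y x ->
  phom X x x (concat X f g) (const_loop X x) -> phom X x y f (rev_path X g).
Proof.
  intros pf pg H.
  eapply phom_trans. { apply phom_sym. apply phom_rid; eauto. }
  eapply phom_trans. { apply phom_concat with y. apply phom_refl; eauto. apply phom_sym. apply phom_inv with x; eauto. }
  eapply phom_trans. { apply phom_sym. apply phom_assoc with y x; pth. }
  eapply phom_trans. { apply phom_concat with x. eauto. apply phom_refl; pth. }
  apply phom_lid; pth.
Qed.

Lemma conj_rev (X : TopSpace) u f a b : path X u a b -> path X f a a ->
  phom X b b (conjg X u (rev_path X f)) (rev_path X (conjg X u f)).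
Proof.
  intros pu pf. apply inv_unique; try apply path_conj with a; pth.
  eapply phom_trans. { apply phom_sym. apply (conj_mul X u (rev_path X f) f a b); pth. }
  eapply phom_trans. { apply conj_hom with a; auto. apply phom_inv' with a; auto. }
  apply conj_const; auto.
Qed.

Definition nof {K : Type} (g : nat -> K) (k : K) : nat := epsilon (inhabits 0%nat) (fun n => g n = k).
Definition shiftK {K : Type} (g : nat -> K) (k : K) : K :=
  if excluded_middle_informative (exists n, g n = k) then g (S (nof g k)) else k.
Definition swapK {K : Type} (a b : K) (j : K) : K :=
  if excluded_middle_informative (j = a) then b else if excluded_middle_informative (j = b) then a else j.

Lemma nof_spec {K : Type} (g : nat -> K) k : (exists n, g n = k) -> g (nof g k) = k.
Proof. intros H. unfold nof. apply (epsilon_spec (inhabits 0%nat) (fun n => g n = k) H). Qed.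

Lemma avoid (K : Type) : infinite_card K -> forall k0 : K, exists tau : K -> K,
  (forall k l, tau k = tau l -> k = l) /\ forall k, tau k <> k0.
Proof.
  intros [g gi] k0. exists (fun k => swapK k0 (g 0%nat) (shiftK g k)).
  assert (Sinj : forall k l, shiftK g k = shiftK g l -> k = l).
  { intros k l. unfold shiftK.
    destruct (excluded_middle_informative (exists n, g n = k)) as [Ek|Nk];
    destruct (excluded_middle_informative (exists n, g n = l)) as [El|Nl]; intro E.
    - apply gi in E. injection E as E. rewrite <- (nof_spec g k Ek), <- (nof_spec g l El), E; auto.
    - exfalso; apply Nl; eauto.
    - exfalso; apply Nk; eauto.
    - auto. }
  assert (Sav : forall k, shiftK g k <> g 0%nat).
  { intros k. unfold shiftK.
    destruct (excluded_middle_informative (exists n, g n = k)) as [Ek|Nk]; intro E.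
    - apply gi in E; discriminate.
    - apply Nk; eauto. }
  assert (Winj : forall j j', swapK k0 (g 0%nat) j = swapK k0 (g 0%nat) j' -> j = j').
  { intros j j'. unfold swapK.
    destruct (excluded_middle_informative (j = k0)); destruct (excluded_middle_informative (j' = k0));
    try destruct (excluded_middle_informative (j = g 0%nat));
    try destruct (excluded_middle_informative (j' = g 0%nat)); intros; subst; congruence. }
  split.
  - intros k l E. apply Sinj, Winj, E.
  - intros k E. unfold swapK in E.
    destruct (excluded_middle_informative (shiftK g k = k0)).
    + apply (Sav k). congruence.
    + destruct (excluded_middle_informative (shiftK g k = g 0%nat)).
      * apply (Sav k); auto.
      * congruence.
Qed.

Lemma card_lt_map (K : Type) (S T : R -> Prop) (phi : R -> R) : card_lt T K ->
  (forall t, S t -> T (phi t)) -> (forall s t, S s -> S t -> phi s = phi t -> s = t) -> card_lt S K.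
Proof.
  intros [[g gi] N] HT Hi. split.
  - exists (fun t => g (phi t)). intros s t Ss St E. apply Hi; auto.
  - intros [h [hS hi]]. apply N. exists (fun k => phi (h k)). split; [auto|].
    intros k l E. apply hi. apply Hi; auto.
Qed.

Lemma card_lt_add1 (K : Type) (S T : R -> Prop) (p : R) : infinite_card K -> card_lt T K ->
  (forall t, S t -> T t \/ t = p) -> card_lt S K.
Proof.
  intros inf [[g gi] N] HS. split.
  - pose proof inf as [g0 _]. set (k0 := g0 0%nat).
    destruct (avoid K inf k0) as [tau [ti ta]].
    exists (fun t => if Req_EM_T t p then k0 else tau (g t)).
    intros s t Ss St. destruct (Req_EM_T s p); destruct (Req_EM_T t p); intro E.
    + congruence.
    + exfalso; apply (ta (g t)); auto.
    + exfalso; apply (ta (g s)); auto.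
    + apply ti in E. destruct (HS s Ss); [|congruence]. destruct (HS t St); [|congruence]. auto.
  - intros [h [hS hi]]. apply N.
    destruct (classic (exists k0, h k0 = p)) as [[k0 Hk0]|Nk].
    + destruct (avoid K inf k0) as [tau [ti ta]].
      exists (fun k => h (tau k)). split.
      * intros k. destruct (HS _ (hS (tau k))) as [Ht|Ep]; auto.
        exfalso. apply (ta k). apply hi. congruence.
      * intros k l E. apply ti, hi, E.
    + exists h. split; auto. intros k. destruct (HS _ (hS k)) as [Ht|Ep]; auto.
      exfalso; apply Nk; eauto.
Qed.

Definition arc (X : TopSpace) (u : R -> X) (a b : X) :=
  path X u a b /\ forall s t, I01 s -> I01 t -> u s = u t -> s = t.

Lemma uniq_pt (X : TopSpace) (u : R -> X) (P : R -> Prop) (e : R -> R) (x : X) :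
  (forall s t, I01 s -> I01 t -> u s = u t -> s = t) ->
  (forall t, P t -> I01 (e t)) -> (forall s t, e s = e t -> s = t) ->
  exists p, forall t, P t -> u (e t) = x -> t = p.
Proof.
  intros ui Pe ei.
  destruct (classic (exists t, P t /\ u (e t) = x)) as [[p [Pp Ep]]|Nn].
  - exists p. intros t Pt Et. apply ei. apply ui; auto. congruence.
  - exists 0. intros t Pt Et. exfalso; apply Nn; eauto.
Qed.

Lemma conj_alpha (X : TopSpace) (K : Type) (Id : (X -> Prop) -> Prop) u a b f :
  infinite_card K -> arc X u a b -> alpha_I_loop X K Id a f -> alpha_I_loop X K Id b (conjg X u f).
Proof.
  intros inf [pu ui] [[cf [A [IA HA]]] [f0 f1]].
  assert (pc := path_conj X u f a b pu (conj cf (conj f0 f1))).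
  destruct pc as [cc [c0 c1]].
  split; [|split; auto]. split; auto. exists A. split; auto.
  intros x nA. specialize (HA x nA).
  set (M := fun t => 1/2 < t /\ 2*t-1 <= 1/2 /\ I01 (2*(2*t-1)) /\ f (2*(2*t-1)) = x).
  assert (CM : card_lt M K).
  { apply (card_lt_map K M _ (fun t => 2*(2*t-1)) HA).
    intros t [_ [_ [H1 H2]]]; split; auto. intros s t _ _ E; lra. }
  destruct (uniq_pt X u (fun t => I01 t /\ 1/2 < t /\ 1/2 < 2*t-1) (fun t => 2*(2*t-1)-1) x ui)
    as [p2 Hp2].
  { intros t [It [H1 H2]]. unfold I01 in *; lra. } { intros s t E; lra. }
  destruct (uniq_pt X u (fun t => I01 t /\ t <= 1/2) (fun t => 1 - 2*t) x ui)
    as [p1 Hp1].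
  { intros t [It H1]. unfold I01 in *; lra. } { intros s t E; lra. }
  apply (card_lt_add1 K _ (fun t => M t \/ t = p2) p1 inf).
  { apply (card_lt_add1 K _ M p2 inf CM). auto. }
  intros t [It Et]. unfold conjg, concat, rev_path in Et.
  destruct (Rle_dec t (1/2)) as [h1|h1].
  - right. apply Hp1; auto.
  - destruct (Rle_dec (2*t-1) (1/2)) as [h2|h2].
    + left; left. unfold M. repeat split; auto; unfold I01 in *; lra.
    + left; right. apply Hp2; auto. repeat split; auto; unfold I01 in *; lra.
Qed.

Lemma inP_path (X : TopSpace) K Id a f : inP X K Id a f -> path X f a a.
Proof.
  induction 1.
  - destruct H as [[c _] [h0 h1]]. split; auto.
  - apply path_const.
  - apply path_rev; auto.
  - eapply path_concat; eauto.
  - apply lh_phom in H0. eapply phom_path2; eauto.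
Qed.

Lemma inP_conj (X : TopSpace) K Id u a b f : infinite_card K -> arc X u a b ->
  inP X K Id a f -> inP X K Id b (conjg X u f).
Proof.
  intros inf au. assert (pu : path X u a b) by apply au.
  induction 1.
  - apply inP_gen. apply (conj_alpha X K Id u a b); auto.
  - eapply inP_hom. apply inP_one. apply lh_phom. apply phom_sym. apply conj_const; auto.
  - eapply inP_hom. apply inP_inv; eauto. apply lh_phom. apply phom_sym.
    apply conj_rev with (a := a); auto. eapply inP_path; eauto.
  - eapply inP_hom. apply (inP_mul X K Id b _ _ IHinP1 IHinP2). apply lh_phom. apply phom_sym.
    apply conj_mul with (a := a); auto; eapply inP_path; eauto.
  - eapply inP_hom. eauto. apply lh_phom. apply lh_phom in H0. apply conj_hom with a; auto.
Qed.

Theorem theorem3p5 (X : TopSpace) (Id : (X -> Prop) -> Prop) (K : Type) :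
  hausdorff X -> locally_compact X -> arc_connected X ->
  (exists p q : X, p <> q) ->
  ideal X Id -> infinite_card K ->
  forall a b : X, P_isomorphic X K Id a b.
Proof.
  intros _ _ ac _ _ inf a b.
  destruct (classic (a = b)) as [E|NE].
  - subst b. exists (fun f => f). split; [auto|]. split; [auto|]. split; [auto|]. split.
    + intros g Hg. exists g. split; auto. apply lh_phom. apply phom_refl. eapply inP_path; eauto.
    + intros f g Hf Hg. apply lh_phom. apply phom_refl. eapply path_concat; eapply inP_path; eauto.
  - destruct (ac a b NE) as [h [ch [hi [h0 h1]]]].
    assert (au : arc X h a b) by (split; [split; auto|]; auto).
    assert (pu : path X h a b) by apply au.
    assert (au' : arc X (rev_path X h) b a).
    { split. apply path_rev; auto. intros s t Is It E. unfold rev_path in E.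
      apply hi in E; unfold I01 in *; lra. }
    assert (pu' : path X (rev_path X h) b a) by apply au'.
    exists (conjg X h). split; [|split; [|split; [|split]]].
    + intros f Hf. apply inP_conj with a; auto.
    + intros f g Hf H. apply lh_phom. apply lh_phom in H. apply conj_hom with a; auto.
    + intros f g Hf Hg H. apply lh_phom. apply lh_phom in H.
      eapply phom_trans. { apply phom_sym. apply conj_cancel with (u := h) (b := b); auto. eapply inP_path; eauto. }
      eapply phom_trans. { apply conj_hom with (a := b); eauto. }
      apply conj_cancel with (u := h) (b := b); auto. eapply inP_path; eauto.
    + intros g Hg. exists (conjg X (rev_path X h) g). split.
      * apply inP_conj with b; auto.
      * apply lh_phom.
        apply phom_ext with (conjg X (rev_path X (rev_path X h)) (conjg X (rev_path X h) g)) g.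
        apply conj_cancel with (a := b) (b := a); auto. eapply inP_path; eauto.
        intros t _. unfold conjg, concat. repeat rewrite rev_rev. reflexivity.
        reflexivity.
    + intros f g Hf Hg. apply lh_phom. apply conj_mul with (a := a); auto; eapply inP_path; eauto.
Qed.
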